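(* The pair $(\alpha_\infty,\varphi_\infty)=(0,\varphi_\infty)$ satisfies $d_{A_\infty}^*\alpha_\infty-2\pi^{\mathrm{skew}}\bigl(i*[\Phi_\infty^*\wedge\varphi_\infty]\bigr)=0$.
   Context: $X$ is a compact Riemann surface, $\Theta$ a square root of $K_X$, $E=\Theta\oplus\Theta^*$ with hermitian metric $H=k\oplus k^{-1}$ for a hermitian metric $k$ on $\Theta$. Let $q\in H^0(K_X^2)$ have only simple zeros, $X^\times=X\setminus q^{-1}(0)$, and $\dot q\in H^0(K_X^2)$. In a local holomorphic frame $dz^{\pm1/2}$ of $\Theta^{\pm1}$ with $H=\mathrm{diag}(\kappa,\kappa^{-1})$, $q=f\,dz^2$, $\dot q=\dot f\,dz^2$, define on $X^\times$ \[ \Phi_\infty=\begin{pmatrix}0&|f|^{-1/2}\kappa^{-1}f\\|f|^{1/2}\kappa&0\end{pmatrix}dz,\qquad \varphi_\infty=\begin{pmatrix}0&\tfrac12|f|^{-1/2}\kappa^{-1}\dot f\\\tfrac12|f|^{1/2}\kappa\,\dot f/f&0\end{pmatrix}dz \] (globally, $\Phi_\infty=\begin{pmatrix}0&|q|_k^{-1/2}q\\|q|_k^{1/2}&0\end{pmatrix}$ and $\varphi_\infty=\begin{pmatrix}0&\frac12|q|_k^{-1/2}\dot q\\\frac12|q|_k^{1/2}\dot q/q&0\end{pmatrix}$, $|q|_k$ the norm of $q$ induced by $k$). $A_\infty$ is the flat unitary connection of the limiting configuration $(A_\infty,\Phi_\infty)$ (the precise form is irrelevant here since $\alpha_\infty=0$).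 $\Phi_\infty^*$ is the $H$-adjoint, $*$ the Hodge star of a conformal metric on $X$, and $\pi^{\mathrm{skew}}:\mathfrak{sl}(E)\to\mathfrak{su}(E)$ the orthogonal projection onto $H$-skew-hermitian endomorphisms. *)

(* Defs.v *)
(* Pointwise (local-frame) formalization over an arbitrary
   numeric closed field C (e.g. complex numbers). *)
From HB Require Import structures.
From mathcomp Require Import all_boot all_order all_algebra.
Set Implicit Arguments. Unset Strict Implicit. Unset Printing Implicit Defensive.
Import Order.TTheory GRing.Theory Num.Theory.
Local Open Scope ring_scope.

Section Defs.
Variable C : numClosedFieldType.

(* 2x2 matrix [[a, b], [c, d]] in the frame (dz^{1/2}, dz^{-1/2}) *)
Definition mx2 (a b c d : C) : 'M[C]_2 :=
  \matrix_(i < 2, j < 2)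
    (if (i == 0%N :> nat) then (if (j == 0%N :> nat) then a else b)
     else (if (j == 0%N :> nat) then c else d)).

Definition Hmx (kappa : C) : 'M[C]_2 := mx2 kappa 0 0 kappa^-1.

Definition hadj (kappa : C) (M : 'M[C]_2) : 'M[C]_2 :=
  Hmx kappa^-1 *m (map_mx Num.conj M)^T *m Hmx kappa.

Definition pi_skew (kappa : C) (M : 'M[C]_2) : 'M[C]_2 :=
  2^-1 *: (M - hadj kappa M).

(* End(E)-valued 1-form  a dz + b dzbar, stored as the pair (a, b) *)
Definition form1 := ('M[C]_2 * 'M[C]_2)%type.

(* H-adjoint of a 1-form: (a dz + b dzbar)^* = b^* dz + a^* dzbar *)
Definition form_adj (kappa : C) (X : form1) : form1 :=
  (hadj kappa X.2, hadj kappa X.1).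

(* [X /\ Y] = X /\ Y + Y /\ X for End(E)-valued 1-forms; the result is
   returned as the coefficient c of the 2-form c dz /\ dzbar. *)
Definition wedge_br (X Y : form1) : 'M[C]_2 :=
  (X.1 *m Y.2 - X.2 *m Y.1) + (Y.1 *m X.2 - Y.2 *m X.1).

(* Hodge star of the 2-form c dz /\ dzbar for the conformal metric
   lambda (dx^2 + dy^2): dz /\ dzbar = -2i dx/\dy and *(dx/\dy) = 1/lambda. *)
Definition hodge2 (lambda : C) (c : 'M[C]_2) : 'M[C]_2 :=
  (- (2%:R * 'i) / lambda) *: c.

(* Phi_infinity and varphi_infinity in the local frame, with q = f dz^2,
   qdot = fd dz^2, H = diag(kappa, kappa^-1) *)
Definition Phi_inf (kappa f : C) : form1 :=
  (mx2 0 ((sqrtC `|f|)^-1 * kappa^-1 * f) (sqrtC `|f| * kappa) 0, 0).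

Definition phi_inf (kappa f fd : C) : form1 :=
  (mx2 0 (2^-1 * (sqrtC `|f|)^-1 * kappa^-1 * fd)
         (2^-1 * sqrtC `|f| * kappa * (fd / f)) 0, 0).

End Defs.

(* Main.v *)
Require Import Defs.
From HB Require Import structures.
From mathcomp Require Import all_boot all_order all_algebra ring.
Import Order.TTheory GRing.Theory Num.Theory.
Local Open Scope ring_scope.
Section M.
Variable C : numClosedFieldType.
Lemma mx2_mul (a b c d a' b' c' d' : C) :
  mx2 a b c d *m mx2 a' b' c' d' = mx2 (a*a'+b*c') (a*b'+b*d') (c*a'+d*c') (c*b'+d*d').
Proof.
apply/matrixP => i j; rewrite !mxE !big_ord_recr big_ord0 /= !mxE /= add0r.
by case: i => [[|[|i]] Hi] //; case: j => [[|[|j]] Hj].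
Qed.
Lemma mx2_adj (a b c d : C) : (map_mx Num.conj (mx2 a b c d))^T = mx2 a^* c^* b^* d^*.
Proof.
by apply/matrixP => i j; rewrite !mxE; case: i => [[|[|i]] Hi] //; case: j => [[|[|j]] Hj].
Qed.
Lemma mx2_add (a b c d a' b' c' d' : C) :
  mx2 a b c d + mx2 a' b' c' d' = mx2 (a+a') (b+b') (c+c') (d+d').
Proof.
by apply/matrixP => i j; rewrite !mxE; case: i => [[|[|i]] Hi] //; case: j => [[|[|j]] Hj].
Qed.
Lemma mx2_opp (a b c d : C) : - mx2 a b c d = mx2 (-a) (-b) (-c) (-d).
Proof.
by apply/matrixP => i j; rewrite !mxE; case: i => [[|[|i]] Hi] //; case: j => [[|[|j]] Hj].
Qed.
Lemma mx2_0 : (0 : 'M[C]_2) = mx2 0 0 0 0.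
Proof.
by apply/matrixP => i j; rewrite !mxE; case: i => [[|[|i]] Hi] //; case: j => [[|[|j]] Hj].
Qed.
End M.

Lemma wedge0 (C : numClosedFieldType) (kappa lambda f fd : C) :
  0 < kappa -> 0 < lambda -> f != 0 ->
  wedge_br (form_adj kappa (Phi_inf kappa f)) (phi_inf kappa f fd) = 0.
Proof.
move=> hk hl hf.
set s := sqrtC `|f|.
have s0 : s != 0 by rewrite sqrtC_eq0 normr_eq0.
have k0 : kappa != 0 by rewrite gt_eqF.
have cs : s^* = s by apply/CrealP; rewrite /s; apply/ger0_real; rewrite sqrtC_ge0.
have ck : kappa^* = kappa by apply/CrealP; apply/ger0_real; exact: ltW.
have cf : f^* = s^+4 / f.
  have -> : s^+4 = (s^+2)^+2 by rewrite -exprM.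
  by rewrite sqrtCK normCK mulrAC mulfV // mul1r.
have cM : forall x y : C, (x*y)^* = x^* * y^* by move=> x y; rewrite rmorphM.
have cV : forall x : C, (x^-1)^* = (x^*)^-1 by move=> x; rewrite fmorphV.
have c0 : (0:C)^* = 0 by rewrite rmorph0.
rewrite /wedge_br /form_adj /hadj /Phi_inf /phi_inf /Hmx /= !(@mx2_0 C) !mx2_adj.
rewrite !mx2_mul !mx2_opp !mx2_add -/s !(cM, cV, c0) cs ck cf.
congr mx2; field; rewrite ?s0 ?k0 ?hf //.
Qed.

Lemma hadj0 (C : numClosedFieldType) (kappa : C) : hadj kappa 0 = 0.
Proof.
rewrite /hadj /Hmx !(@mx2_0 C) mx2_adj !mx2_mul !rmorph0 !(mul0r, mulr0, addr0).
by [].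
Qed.

Theorem lemma3p11 (C : numClosedFieldType) (kappa lambda f fd : C) :
  0 < kappa -> 0 < lambda -> f != 0 ->
  (0 : 'M[C]_2)
    - 2%:R *: pi_skew kappa
        ('i *: hodge2 lambda
           (wedge_br (form_adj kappa (Phi_inf kappa f)) (phi_inf kappa f fd)))
  = 0.
Proof.
move=> hk hl hf.
by rewrite (@wedge0 C kappa lambda f fd hk hl hf) /hodge2 !scaler0 /pi_skew hadj0 subrr !scaler0 subrr.
Qed.
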